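(* Let $n, C_1, C_2$ be positive constants with $C_2 > 1$, and let $f:[0,+\infty)\to[0,+\infty)$ be a monotonically increasing nonnegative function satisfying $$f(r) \le C_1 r^n f\!\left(\tfrac{r}{2}\right) \quad \text{for all } r \in [C_2,+\infty).$$ Then there is a positive constant $C_3$, depending only on $n, C_1, C_2$ and $f(C_2)$, such that $$f(r) \le C_3\, e^{2n(\log r)^2} \quad \text{for all } r \in [C_2,+\infty).$$ *)

(* Defs.v *)
From Stdlib Require Export Reals.
Open Scope R_scope.

(* Main.v *)
Require Import Defs.
From Stdlib Require Import Reals.
From Stdlib Require Import ZArith Lra Psatz.
Open Scope R_scope.

Lemma exp_le' x y : x <= y -> exp x <= exp y.
Proof. intros [H|H]; [left; apply exp_increasing; auto | subst; lra]. Qed.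

Lemma ln_le' x y : 0 < x -> x <= y -> ln x <= ln y.
Proof. intros Hx [H|H]; [left; apply ln_increasing; auto | subst; lra]. Qed.

Definition Kc (c m n : R) := (m + n*c)^2 / (4*n*(2*c-1)*c) + m.

Lemma quad c m n L x : 1/2 < c -> 0 <= m -> 0 < n -> 0 <= L -> 0 <= x ->
  x*c <= L + c -> x*(m+n*L) <= Kc c m n + 2*n*L^2.
Proof.
  intros Hc Hm Hn HL Hx Hxc.
  unfold Kc.
  set (e := 2*c-1). set (b := m + n*c).
  assert (He : 0 < e) by (unfold e; lra).
  assert (H1 : c*(x*(m+n*L)) <= (L+c)*(m+n*L)).
  { assert (0 <= m + n*L) by nra. nra. }
  assert (H2 : 0 <= (2*n*e*L - b)^2) by apply pow2_ge_0.
  assert (Hq : (L+c)*(m+n*L) <= c*(b^2/(4*n*e*c) + m + 2*n*L^2)).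
  { assert (E : c*(b^2/(4*n*e*c)) = b^2/(4*n*e)) by (field; lra).
    assert (E2 : b^2/(4*n*e) = (2*n*e*L-b)^2/(4*n*e) + b*L - n*e*L^2) by (field; lra).
    assert (0 <= (2*n*e*L-b)^2/(4*n*e)).
    { apply Rmult_le_pos; [exact H2| left; apply Rinv_0_lt_compat; nra]. }
    replace (c*(b^2/(4*n*e*c) + m + 2*n*L^2)) with (c*(b^2/(4*n*e*c)) + c*m + 2*c*n*L^2) by ring.
    rewrite E, E2. unfold b, e in *. nra. }
  assert (c*(x*(m+n*L)) <= c*(b^2/(4*n*e*c) + m + 2*n*L^2)) by lra.
  apply Rmult_le_reg_l with c; lra.
Qed.

Theorem lemma2p1 :
  forall (n C1 C2 a : R), 0 < n -> 0 < C1 -> 1 < C2 ->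
  exists C3 : R, 0 < C3 /\
    forall f : R -> R,
      (forall x, 0 <= x -> 0 <= f x) ->
      (forall x y, 0 <= x -> x <= y -> f x <= f y) ->
      (forall r, C2 <= r -> f r <= C1 * Rpower r n * f (r / 2)) ->
      f C2 = a ->
      forall r, C2 <= r -> f r <= C3 * exp (2 * n * (ln r) ^ 2).
Proof.
  intros n C1 C2 a Hn HC1 HC2.
  set (M := C1 + 1).
  set (c := ln 2). assert (Hc : / 2 < c) by apply ln_lt_2.
  set (m := ln M).
  assert (HM1 : 1 <= M) by (unfold M; lra).
  assert (Hm : 0 <= m) by (unfold m; rewrite <- ln_1; apply ln_le'; lra).
  exists ((Rabs a + 1) * exp (Kc c m n)). split.
  { apply Rmult_lt_0_compat; [pose proof (Rabs_pos a); lra | apply exp_pos]. }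
  intros f Hpos Hmono Hrec Ha.
  assert (Ha0 : 0 <= a) by (rewrite <- Ha; apply Hpos; lra).
  assert (HP : forall x, 0 < x -> 0 < Rpower x n) by (intros; unfold Rpower; apply exp_pos).
  assert (HP1 : forall x, 1 <= x -> 1 <= Rpower x n).
  { intros x Hx. unfold Rpower. rewrite <- exp_0. apply exp_le'.
    assert (0 <= ln x) by (rewrite <- ln_1; apply ln_le'; lra). nra. }
  assert (HPm : forall x y, 0 < x -> x <= y -> Rpower x n <= Rpower y n).
  { intros x y Hx Hxy. unfold Rpower. apply exp_le'.
    apply Rmult_le_compat_l; [lra | apply ln_le'; lra]. }
  assert (Q : forall k : nat, forall r, 0 <= r -> r <= 2^k * C2 ->
            f r <= a * (M * Rpower (Rmax r 1) n)^k).
  { induction k as [|k IH]; intros r Hr Hrk.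
    - simpl in *. rewrite Rmult_1_r, <- Ha. apply Hmono; lra.
    - assert (HB : 1 <= M * Rpower (Rmax r 1) n).
      { assert (1 <= Rpower (Rmax r 1) n) by (apply HP1; apply Rmax_r). nra. }
      destruct (Rle_lt_dec r C2) as [Hle|Hgt].
      + assert (f r <= a) by (rewrite <- Ha; apply Hmono; lra).
        assert (1 <= (M * Rpower (Rmax r 1) n)^(S k)).
        { apply pow_R1_Rle. lra. }
        nra.
      + rewrite Rmax_left by lra. rewrite Rmax_left in HB by lra.
        assert (Hr2 : f (r/2) <= a * (M * Rpower (Rmax (r/2) 1) n)^k).
        { apply IH; [lra|]. simpl in Hrk. lra. }
        assert (Hmx : Rpower (Rmax (r/2) 1) n <= Rpower r n).
        { apply HPm; [pose proof (Rmax_r (r/2) 1); lra|].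
          apply Rmax_lub; lra. }
        assert (Hpw : (M * Rpower (Rmax (r/2) 1) n)^k <= (M * Rpower r n)^k).
        { apply pow_incr. split.
          - pose proof (HP (Rmax (r/2) 1) ltac:(pose proof (Rmax_r (r/2) 1); lra)). nra.
          - apply Rmult_le_compat_l; lra. }
        assert (Hfr2 : 0 <= f (r/2)) by (apply Hpos; lra).
        assert (HPr : 0 < Rpower r n) by (apply HP; lra).
        pose proof (Hrec r ltac:(lra)).
        assert (Hpk : 0 <= (M * Rpower r n)^k) by (apply pow_le; nra).
        simpl.
        assert (f (r/2) <= a * (M * Rpower r n)^k) by nra.
        assert (C1 * Rpower r n * f (r/2) <= M * Rpower r n * f (r/2)).
        { apply Rmult_le_compat_r; [lra|]. apply Rmult_le_compat_r; unfold M; lra. }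
        assert (M * Rpower r n * f (r/2) <= M * Rpower r n * (a * (M * Rpower r n)^k)).
        { apply Rmult_le_compat_l; nra. }
        nra. }
  intros r Hr.
  set (L := ln r).
  assert (HL : 0 <= L) by (unfold L; rewrite <- ln_1; apply ln_le'; lra).
  set (xx := ln (r / C2) / c).
  assert (Hc0 : 0 < c) by lra.
  assert (Hlnrc : 0 <= ln (r/C2)).
  { rewrite <- ln_1. apply ln_le'; [lra|].
    apply (Rmult_le_reg_r C2); [lra|]. field_simplify; lra. }
  assert (Hxx : 0 <= xx) by (unfold xx; apply Rmult_le_pos; [lra| left; apply Rinv_0_lt_compat; lra]).
  destruct (archimed xx) as [Hu1 Hu2].
  assert (Hup : (0 <= up xx)%Z) by (apply Z.lt_le_incl, lt_0_IZR; lra).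
  set (k := Z.to_nat (up xx)).
  assert (Hk : INR k = IZR (up xx)) by (unfold k; rewrite INR_IZR_INZ, Z2Nat.id; auto).
  assert (H2k : 2^k = exp (INR k * c)).
  { rewrite <- Rpower_pow by lra. reflexivity. }
  assert (Hrk : r <= 2^k * C2).
  { rewrite H2k.
    assert (ln (r/C2) <= INR k * c).
    { rewrite Hk. assert (Hxc : xx * c = ln (r/C2)) by (unfold xx; field; lra). nra. }
    assert (r / C2 <= exp (INR k * c)).
    { rewrite <- (exp_ln (r/C2)) by (apply Rdiv_lt_0_compat; lra). apply exp_le'; lra. }
    apply (Rmult_le_compat_r C2) in H0; [|lra].
    replace (r / C2 * C2) with r in H0 by (field; lra). exact H0. }
  pose proof (Q k r ltac:(lra) Hrk) as Hf.
  rewrite Rmax_left in Hf by lra.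
  assert (HPr : 0 < Rpower r n) by (apply HP; lra).
  assert (HMP : 0 < M * Rpower r n) by nra.
  rewrite <- (Rpower_pow k) in Hf by exact HMP.
  unfold Rpower at 1 in Hf.
  rewrite ln_mult in Hf by lra.
  unfold Rpower in Hf. rewrite ln_exp in Hf. fold m L in Hf.
  assert (Hq : INR k * (m + n*L) <= Kc c m n + 2*n*L^2).
  { apply quad; [lra|lra|lra|lra|apply pos_INR|].
    rewrite Hk.
    assert (ln (r/C2) <= L).
    { unfold L. apply ln_le'; [apply Rdiv_lt_0_compat; lra|].
      apply (Rmult_le_reg_r C2); [lra|]. field_simplify; nra. }
    assert (IZR (up xx) <= xx + 1) by lra.
    unfold xx in H0.
    assert (Hxc : xx * c = ln (r/C2)) by (unfold xx; field; lra).
    nra. }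
  assert (exp (INR k * (m + n * L)) <= exp (Kc c m n) * exp (2*n*L^2)).
  { rewrite <- exp_plus. apply exp_le'. lra. }
  pose proof (exp_pos (INR k * (m + n * L))).
  pose proof (exp_pos (Kc c m n)). pose proof (exp_pos (2*n*L^2)).
  assert (a <= Rabs a + 1) by (rewrite Rabs_right; lra).
  fold L.
  nra.
Qed.
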